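(* Let $\Gamma$ be a reduct of $(\mathbb{Z};<)$ with finite relational signature. Then for all $a_1,a_2\in\mathbb{Z}$ at least one of the following holds: (i) there are $r\ge0$ and a finite $S\subseteq\mathbb{Z}$ with $\{a_1,a_2\}\subseteq S$ such that every homomorphism $f$ from $\Gamma[S]$ to $\Gamma$ satisfies $|f(a_1)-f(a_2)|\le r$; (ii) there is a homomorphism $h\colon\Gamma\to\mathbb{Q}.\Gamma$ such that $h(a_1)$ and $h(a_2)$ lie in different copies of $\mathbb{Z}$ in $\mathbb{Q}.\mathbb{Z}$.
   Context: A reduct of $(\mathbb{Z};<)$ is a relational structure with domain $\mathbb{Z}$ whose relations are first-order definable in $(\mathbb{Z};<)$; $\Gamma[S]$ is the induced substructure on $S$. $\mathbb{Q}.\mathbb{Z}=\mathbb{Q}\times\mathbb{Z}$ with the lexicographic order; its copies of $\mathbb{Z}$ are the sets $\{a\}\times\mathbb{Z}$. $\mathbb{Q}.\Gamma$ is the structure on $\mathbb{Q}.\mathbb{Z}$ interpreting each relation symbol of $\Gamma$ by the relation defined over $(\mathbb{Q}.\mathbb{Z};<)$ by a first-order formula defining it over $(\mathbb{Z};<)$. *)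

(* Defs.v *)
From HB Require Import structures.
From mathcomp Require Import all_boot all_order all_algebra.
Set Implicit Arguments. Unset Strict Implicit. Unset Printing Implicit Defensive.
Import Order.TTheory GRing.Theory Num.Theory.
Local Open Scope ring_scope.

(* First-order formulas in the language {<} (with equality), variables as
   de Bruijn indices: variable k refers to the k-th entry of the environment;
   FEx binds index 0 and shifts the others. *)
Inductive fo : Type :=
  | FLt : nat -> nat -> fo
  | FEq : nat -> nat -> fo
  | FNot : fo -> fo
  | FAnd : fo -> fo -> fo
  | FEx : fo -> fo.

Definition scons (D : Type) (d : D) (e : nat -> D) : nat -> D :=
  fun k => match k with 0%N => d | k'.+1 => e k' end.

Fixpoint sat (D : Type) (lt : D -> D -> Prop) (e : nat -> D) (phi : fo) : Prop :=
  match phi with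
  | FLt i j => lt (e i) (e j)
  | FEq i j => e i = e j
  | FNot p => ~ sat lt e p
  | FAnd p q => sat lt e p /\ sat lt e q
  | FEx p => exists d : D, sat lt (scons d e) p
  end.

Fixpoint fv_below (n : nat) (phi : fo) : bool :=
  match phi with
  | FLt i j => (i < n)%N && (j < n)%N
  | FEq i j => (i < n)%N && (j < n)%N
  | FNot p => fv_below n p
  | FAnd p q => fv_below n p && fv_below n q
  | FEx p => fv_below n.+1 p
  end.

Definition Zlt (x y : int) : Prop := x < y.

(* Q.Z = Q x Z with the lexicographic order; copies of Z are {a} x Z. *)
Definition QZ := (rat * int)%type.
Definition QZlt (p q : QZ) : Prop :=
  (p.1 < q.1) \/ (p.1 = q.1 /\ p.2 < q.2).

(* A reduct Gamma of (Z;<) with finite relational signature is given by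
   m relation symbols, symbol i of arity ar i, interpreted by the relation
   defined over (Z;<) by the formula phi i (free variables < ar i).
   A tuple of arity n is represented by a function t : nat -> D, of which
   only the entries t 0, ..., t (n-1) matter. *)

Definition relZ (m : nat) (phi : 'I_m -> fo) (i : 'I_m) (t : nat -> int) : Prop :=
  sat Zlt t (phi i).
Definition relQZ (m : nat) (phi : 'I_m -> fo) (i : 'I_m) (t : nat -> QZ) : Prop :=
  sat QZlt t (phi i).

Definition hom_induced (m : nat) (ar : 'I_m -> nat) (phi : 'I_m -> fo)
    (S : seq int) (f : int -> int) : Prop :=
  forall (i : 'I_m) (t : nat -> int),
    (forall k, (k < ar i)%N -> t k \in S) ->
    relZ phi i t -> relZ phi i (fun k => f (t k)).

Definition hom_to_QZ (m : nat) (ar : 'I_m -> nat) (phi : 'I_m -> fo)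
    (h : int -> QZ) : Prop :=
  forall (i : 'I_m) (t : nat -> int),
    relZ phi i t -> relQZ phi i (fun k => h (t k)).

(* Main.v *)
Require Import Defs.
From HB Require Import structures.
From mathcomp Require Import all_boot all_order all_algebra.
From mathcomp Require Import zify ring lra.
From Stdlib Require Import Classical ClassicalEpsilon.
Import Order.TTheory GRing.Theory Num.Theory.
Local Open Scope ring_scope.
Set Implicit Arguments. Unset Strict Implicit.

Record ax (D : Type) (lt : D -> D -> Prop) (d : D -> D -> option int) : Prop := Ax {
  ax_inh : exists u : D, True;
  ax_ltT : forall u v w, lt u v -> lt v w -> lt u w;
  ax_ltI : forall u, ~ lt u u;
  ax_tot : forall u v, lt u v \/ u = v \/ lt v u;
  ax_dref : forall u, d u u = Some 0;
  ax_d0 : forall u v, d u v = Some 0 -> u = v;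
  ax_dlt : forall u v c, d u v = Some c -> (lt u v <-> 0 < c);
  ax_dT : forall u v w a b, d u v = Some a -> d v w = Some b -> d u w = Some (a + b);
  ax_dS : forall u v a, d u v = Some a -> d v u = Some (- a);
  ax_dN : forall u v w c, d u v = None -> d v w = Some c -> (lt u v <-> lt u w);
  ax_dN' : forall u v w c, d u v = None -> d v w = Some c -> (lt v u <-> lt w u);
  ax_sh : forall u c, exists v, d u v = Some c }.

Definition far {D : Type} (d : D -> D -> option int) (K : int) (u v : D) :=
  forall c, d u v = Some c -> -K <= c -> c <= K -> False.

Definition pok {D1 D2 : Type} (lt1 : D1 -> D1 -> Prop) (d1 : D1 -> D1 -> option int)
  (lt2 : D2 -> D2 -> Prop) (d2 : D2 -> D2 -> option int) (K : int) u1 v1 u2 v2 :=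
  (lt1 u1 v1 <-> lt2 u2 v2) /\
  (forall c, -K <= c -> c <= K -> (d1 u1 v1 = Some c <-> d2 u2 v2 = Some c)).

Definition MM {D1 D2 : Type} (lt1 : D1 -> D1 -> Prop) (d1 : D1 -> D1 -> option int)
  (lt2 : D2 -> D2 -> Prop) (d2 : D2 -> D2 -> option int) (K : int) (n : nat)
  (e1 : nat -> D1) (e2 : nat -> D2) :=
  forall k l, (k < n)%N -> (l < n)%N -> pok lt1 d1 lt2 d2 K (e1 k) (e1 l) (e2 k) (e2 l).

Section G.
End G.

Lemma dSN D lt d (H : @ax D lt d) u v : d u v = None -> d v u = None.
Proof.
move=> E; case E': (d v u) => [a|] //.
by rewrite (ax_dS H E') in E.
Qed.

Lemma dTN D lt d (H : @ax D lt d) u v w a :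
  d u v = Some a -> d v w = None -> d u w = None.
Proof.
move=> E1 E2; case E: (d u w) => [b|] //.
by rewrite (ax_dT H (ax_dS H E1) E) in E2.
Qed.

Lemma far_sym D lt d (H : @ax D lt d) K u v : far d K u v -> far d K v u.
Proof.
move=> F c E h1 h2; apply: (F (- c)); first exact: (ax_dS H E).
- lia.
- lia.
Qed.

Lemma pok_same D1 D2 lt1 d1 lt2 d2 (H1 : @ax D1 lt1 d1) (H2 : @ax D2 lt2 d2) K
  u1 v1 u2 v2 a : d1 u1 v1 = Some a -> d2 u2 v2 = Some a ->
  pok lt1 d1 lt2 d2 K u1 v1 u2 v2.
Proof.
move=> E1 E2; split.
  by rewrite (ax_dlt H1 E1) (ax_dlt H2 E2).
by move=> c _ _; rewrite E1 E2.
Qed.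

Lemma pok_far D1 D2 lt1 d1 lt2 d2 K u1 v1 u2 v2 :
  far d1 K u1 v1 -> far d2 K u2 v2 -> (lt1 u1 v1 <-> lt2 u2 v2) ->
  @pok D1 D2 lt1 d1 lt2 d2 K u1 v1 u2 v2.
Proof.
move=> F1 F2 E; split => // c h1 h2; split => E'.
  by case: (F1 c E').
by case: (F2 c E').
Qed.

Lemma pok_mono D1 D2 lt1 d1 lt2 d2 K K' u1 v1 u2 v2 : K' <= K ->
  @pok D1 D2 lt1 d1 lt2 d2 K u1 v1 u2 v2 -> pok lt1 d1 lt2 d2 K' u1 v1 u2 v2.
Proof.
move=> hK [h1 h2]; split => // c c1 c2; apply: h2; lia.
Qed.

Lemma pok_swap D1 D2 lt1 d1 lt2 d2 K u1 v1 u2 v2 :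
  @pok D1 D2 lt1 d1 lt2 d2 K u1 v1 u2 v2 -> pok lt2 d2 lt1 d1 K u2 v2 u1 v1.
Proof.
move=> [h1 h2]; split; first by split; apply h1.
by move=> c c1 c2; split; apply h2.
Qed.

Lemma lt_iff_total D lt d (H : @ax D lt d) u v :
  lt v u <-> (~ lt u v /\ u <> v).
Proof.
split.
  move=> h; split.
    by move=> h'; exact: (ax_ltI H (ax_ltT H h' h)).
  by move=> E; subst; exact: (ax_ltI H h).
move=> [h1 h2]; case: (ax_tot H u v) => [h|[h|//]]; [by case: h1 | by case: h2].
Qed.

Lemma eq_iff_d D lt d (H : @ax D lt d) u v : u = v <-> d u v = Some 0.
Proof.
split; first by move=> ->; exact: ax_dref H _.
move=> E; exact: (ax_d0 H E).
Qed.

Lemma pok_sym D1 D2 lt1 d1 lt2 d2 (H1 : @ax D1 lt1 d1) (H2 : @ax D2 lt2 d2) K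
  u1 v1 u2 v2 : 0 <= K ->
  pok lt1 d1 lt2 d2 K u1 v1 u2 v2 -> pok lt1 d1 lt2 d2 K v1 u1 v2 u2.
Proof.
move=> K0 [h1 h2]; split.
  have e0 := h2 0 ltac:(lia) ltac:(lia).
  rewrite (lt_iff_total H1) (lt_iff_total H2).
  have ee : u1 = v1 <-> u2 = v2.
    by rewrite (eq_iff_d H1) (eq_iff_d H2).
  tauto.
move=> c c1 c2; split => E.
  have := ax_dS H2 (proj1 (h2 (- c) ltac:(lia) ltac:(lia)) (ax_dS H1 E)).
  by rewrite opprK.
have := ax_dS H1 (proj2 (h2 (- c) ltac:(lia) ltac:(lia)) (ax_dS H2 E)).
by rewrite opprK.
Qed.

Lemma dNT D lt d (H : @ax D lt d) u v w c :
  d u v = None -> d v w = Some c -> d u w = None.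
Proof.
move=> E1 E2; case E: (d u w) => [b|] //.
by rewrite (ax_dT H E (ax_dS H E2)) in E1.
Qed.

Lemma far_shift D lt d (H : @ax D lt d) K K' u v w c :
  far d K u v -> d v w = Some c -> -K' <= c -> c <= K' -> 0 <= K' -> K' + K' <= K ->
  far d K' u w /\ (lt u v <-> lt u w).
Proof.
move=> F E c1 c2 K0 KK; split.
  move=> b Eb b1 b2; apply: (F (b + - c)); [|lia|lia].
  exact: (ax_dT H Eb (ax_dS H E)).
case Ed: (d u v) => [a|].
  have E' := ax_dT H Ed E.
  have h1 := ax_dlt H Ed; have h2 := ax_dlt H E'.
  have : ~ (-K <= a /\ a <= K) by move=> [h h']; exact: (F a Ed h h').
  move=> hn; have ha : (0 < a) <-> (0 < a + c) by lia.
  tauto.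
exact: (ax_dN H Ed E).
Qed.

Lemma up_far D lt d (H : @ax D lt d) K' u v w c :
  0 <= K' -> (u = v \/ lt u v) -> d v w = Some c -> K' < c -> far d K' u w /\ lt u w.
Proof.
move=> K0 [<-|h] E cK.
  split; first by move=> b; rewrite E => -[<-]; lia.
  by apply/(ax_dlt H E); lia.
case Ed: (d u v) => [a|].
  have a0 : 0 < a by apply/(ax_dlt H Ed).
  have E' := ax_dT H Ed E; split.
    by move=> b; rewrite E' => -[<-]; lia.
  by apply/(ax_dlt H E'); lia.
have E' := dNT H Ed E; split; first by move=> b; rewrite E'.
by apply/(ax_dN H Ed E).
Qed.

Lemma far_add D lt d (H : @ax D lt d) A B u v w :
  lt u v -> lt v w -> far d A u v -> far d B v w -> 0 <= A -> 0 <= B ->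
  far d (A + B + 1) u w.
Proof.
move=> l1 l2 F1 F2 A0 B0 c E c1 c2.
have c0 : 0 < c by apply/(ax_dlt H E); exact: (ax_ltT H l1 l2).
case Ed: (d u v) => [a|].
  have a0 : 0 < a by apply/(ax_dlt H Ed).
  have aA : A < a by have := F1 a Ed; lia.
  have E2 := ax_dT H (ax_dS H Ed) E.
  have b0 : 0 < - a + c by apply/(ax_dlt H E2).
  have := F2 _ E2; lia.
have E2 := dSN H Ed.
have := ax_dN H E2 E; move=> [_ /(_ l2)] h.
by apply: (ax_ltI H (ax_ltT H l1 h)).
Qed.

Lemma down_far D lt d (H : @ax D lt d) K' C v y w c :
  d v y = Some c -> 0 < c -> lt v w -> far d C v w -> c + K' <= C -> 0 <= K' ->
  far d K' y w /\ lt y w.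
Proof.
move=> E c0 l F cC K0.
have E1 := ax_dS H E.
case Ed: (d v w) => [a|].
  have a0 : 0 < a by apply/(ax_dlt H Ed).
  have aC : C < a by have := F a Ed; lia.
  have E' := ax_dT H E1 Ed; split.
    by move=> b; rewrite E' => -[<-]; lia.
  by apply/(ax_dlt H E'); lia.
have E' := dTN H E1 Ed; split; first by move=> b; rewrite E'.
by apply/(ax_dN' H (dSN H Ed) E).
Qed.

Lemma exists_max D (lt : D -> D -> Prop) (e : nat -> D)
  (T : forall u v w, lt u v -> lt v w -> lt u w) (I : forall u, ~ lt u u)
  (P : nat -> Prop) n :
  (exists k, (k < n)%N /\ P k) ->
  exists k, [/\ (k < n)%N, P k & forall l, (l < n)%N -> P l -> ~ lt (e k) (e l)].
Proof.
elim: n => [|n IH]; first by case=> k [].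
move=> hex.
case: (classic (exists k, (k < n)%N /\ P k)) => [h|h].
  have [k [kn Pk Mk]] := IH h.
  case: (classic (P n /\ lt (e k) (e n))) => [[Pn lkn]|hn].
    exists n; split => // l ln Pl lnl.
    move: ln; rewrite ltnS leq_eqVlt => /orP[/eqP El|ln].
      by subst l; exact: (I _ lnl).
    by apply: (Mk l ln Pl); exact: T lkn lnl.
  exists k; split => //; first by apply: ltn_trans kn _.
  move=> l; rewrite ltnS leq_eqVlt => /orP[/eqP El|ln] Pl.
    by subst l => lk; apply: hn.
  exact: Mk.
case: hex => k [kn Pk].
have kn' : k = n.
  move: kn; rewrite ltnS leq_eqVlt => /orP[/eqP//|kn].
  by case: h; exists k.
subst k; exists n; split => // l.
rewrite ltnS leq_eqVlt => /orP[/eqP El|ln] Pl.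
  by subst l; exact: I.
by case: h; exists l.
Qed.

Lemma far_transfer D1 D2 lt1 d1 lt2 d2 K C (u1 v1 : D1) (u2 v2 : D2) :
  pok lt1 d1 lt2 d2 K u1 v1 u2 v2 -> far d1 C u1 v1 -> C <= K -> far d2 C u2 v2.
Proof.
move=> [_ h] F CK c E c1 c2.
by apply: (F c) => //; apply/(h c); first lia; first lia.
Qed.

Lemma MM_ext D1 D2 lt1 d1 lt2 d2 (H1 : @ax D1 lt1 d1) (H2 : @ax D2 lt2 d2)
  K K' n e1 e2 x y : 0 <= K' -> K' <= K ->
  MM lt1 d1 lt2 d2 K n e1 e2 ->
  (forall l, (l < n)%N -> pok lt1 d1 lt2 d2 K' (e1 l) x (e2 l) y) ->
  MM lt1 d1 lt2 d2 K' n.+1 (scons x e1) (scons y e2).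
Proof.
move=> K0 KK M h [|k] [|l] /= kn ln.
- by apply: (@pok_same _ _ _ _ _ _ H1 H2 K' x x y y 0 (ax_dref H1 x) (ax_dref H2 y)).
- exact: (pok_sym H1 H2 K0 (h l ln)).
- exact: h.
- exact: (pok_mono KK (M k l kn ln)).
Qed.

Lemma stepB1 D1 D2 lt1 d1 lt2 d2 (H1 : @ax D1 lt1 d1) (H2 : @ax D2 lt2 d2)
  K K' n e1 e2 x :
  0 <= K' -> K' + K' + 2 <= K -> MM lt1 d1 lt2 d2 K n e1 e2 ->
  (forall k, (k < n)%N -> far d1 K' (e1 k) x) ->
  (exists k, (k < n)%N /\ lt1 (e1 k) x) ->
  exists y, MM lt1 d1 lt2 d2 K' n.+1 (scons x e1) (scons y e2).
Proof.
move=> K0 KK M F hex.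
have [km [kmn Pkm Mkm]] :=
  exists_max e1 (ax_ltT H1) (ax_ltI H1) (P := fun k => lt1 (e1 k) x) hex.
have [y Ey] := ax_sh H2 (e2 km) (K' + 1).
exists y; apply: (MM_ext H1 H2 K0 _ M); first lia.
move=> l ln.
have Fl := F l ln.
case: (ax_tot H1 (e1 l) x) => [lo|[El|up]].
- have hl : e1 l = e1 km \/ lt1 (e1 l) (e1 km).
    case: (ax_tot H1 (e1 l) (e1 km)) => [h|[h|h]]; [by right|by left|].
    by case: (Mkm l ln lo).
  have pk := M l km ln kmn.
  have hl2 : e2 l = e2 km \/ lt2 (e2 l) (e2 km).
    case: hl => [h|h]; last by right; apply/(proj1 pk).
    left; apply/(eq_iff_d H2); apply/(proj2 pk 0); [lia|lia|].
    by apply/(eq_iff_d H1).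
  have [F2 l2] := up_far H2 K0 hl2 Ey ltac:(lia).
  by apply: pok_far => //; split.
- by case: (Fl 0); [rewrite El; exact: (ax_dref H1 x) | lia | lia].
- have F1 := far_add H1 Pkm up (F km kmn) (far_sym H1 Fl) K0 K0.
  have pk := M km l kmn ln.
  have F2 := far_transfer pk F1 ltac:(lia).
  have l2 : lt2 (e2 km) (e2 l) by apply/(proj1 pk); exact: (ax_ltT H1 Pkm up).
  have [F2' l2'] := down_far (K':=K') H2 Ey ltac:(lia) l2 F2 ltac:(lia) K0.
  apply: pok_far => //; first exact: (far_sym H2 F2').
  split => h.
    by case: (ax_ltI H1 (ax_ltT H1 h up)).
  by case: (ax_ltI H2 (ax_ltT H2 h l2')).
Qed.

Lemma ax_dual D lt d : @ax D lt d -> ax (fun u v => lt v u) (fun u v => d v u).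
Proof.
move=> H; constructor.
- exact: ax_inh H.
- by move=> u v w h1 h2; exact: (ax_ltT H h2 h1).
- exact: ax_ltI H.
- by move=> u v; case: (ax_tot H u v) => [h|[h|h]]; [right;right|right;left|left].
- exact: ax_dref H.
- by move=> u v E; symmetry; exact: (ax_d0 H E).
- move=> u v c E /=; exact: (ax_dlt H E).
- by move=> u v w a b E1 E2 /=; rewrite addrC; exact: (ax_dT H E2 E1).
- by move=> u v a E; exact: (ax_dS H E).
- move=> u v w c E1 E2 /=.
  exact: (ax_dN' H (dSN H E1) (ax_dS H E2)) => //.
- move=> u v w c E1 E2 /=.
  exact: (ax_dN H (dSN H E1) (ax_dS H E2)).
- move=> u c; have [v Ev] := ax_sh H u (- c); exists v.
  by have := ax_dS H Ev; rewrite opprK.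
Qed.

Lemma MM_dual D1 D2 lt1 d1 lt2 d2 K n e1 e2 :
  @MM D1 D2 lt1 d1 lt2 d2 K n e1 e2 ->
  MM (fun u v => lt1 v u) (fun u v => d1 v u) (fun u v => lt2 v u) (fun u v => d2 v u)
     K n e1 e2.
Proof. by move=> M k l kn ln; exact: (M l k ln kn). Qed.

Lemma MM_undual D1 D2 lt1 d1 lt2 d2 K n e1 e2 :
  MM (fun u v => lt1 v u) (fun u v => d1 v u) (fun u v => lt2 v u) (fun u v => d2 v u)
     K n e1 e2 -> @MM D1 D2 lt1 d1 lt2 d2 K n e1 e2.
Proof. by move=> M k l kn ln; exact: (M l k ln kn). Qed.

Lemma step D1 D2 lt1 d1 lt2 d2 (H1 : @ax D1 lt1 d1) (H2 : @ax D2 lt2 d2)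
  K K' n e1 e2 :
  0 <= K' -> K' + K' + 2 <= K -> MM lt1 d1 lt2 d2 K n e1 e2 ->
  forall x, exists y, MM lt1 d1 lt2 d2 K' n.+1 (scons x e1) (scons y e2).
Proof.
move=> K0 KK M x.
case: (classic (exists k, (k < n)%N /\ exists c, d1 (e1 k) x = Some c /\ -K' <= c /\ c <= K'))
  => [[k [kn [c [Ec [c1 c2]]]]]|nA].
  have [y Ey] := ax_sh H2 (e2 k) c.
  exists y; apply: (MM_ext H1 H2 K0 _ M); first lia.
  move=> l ln; have pk := M l k ln kn.
  case: (classic (exists a, d1 (e1 l) (e1 k) = Some a /\ -K <= a /\ a <= K))
    => [[a [Ea [a1 a2]]]|nB].
    have Ea2 : d2 (e2 l) (e2 k) = Some a by apply/(proj2 pk a a1 a2).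
    exact: (@pok_same _ _ _ _ _ _ H1 H2 K' _ _ _ _ _ (ax_dT H1 Ea Ec) (ax_dT H2 Ea2 Ey)).
  have F1 : far d1 K (e1 l) (e1 k).
    by move=> a Ea a1 a2; apply: nB; exists a.
  have F2 := far_transfer pk F1 (lexx K).
  have [F1' o1] := far_shift H1 F1 Ec c1 c2 K0 ltac:(lia).
  have [F2' o2] := far_shift H2 F2 Ey c1 c2 K0 ltac:(lia).
  apply: pok_far => //.
  have := proj1 pk; tauto.
have F : forall k, (k < n)%N -> far d1 K' (e1 k) x.
  move=> k kn c Ec c1 c2; apply: nA; exists k; split => //; exists c; tauto.
case: (classic (exists k, (k < n)%N /\ lt1 (e1 k) x)) => [lo|nlo].
  exact: (stepB1 H1 H2 K0 KK M F lo).
case: (classic (exists k, (k < n)%N /\ lt1 x (e1 k))) => [up|nup].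
  have F' : forall k, (k < n)%N -> far (fun u v => d1 v u) K' (e1 k) x.
    by move=> k kn; exact: (far_sym H1 (F k kn)).
  have [y My] := stepB1 (ax_dual H1) (ax_dual H2) K0 KK (MM_dual M) F' up.
  by exists y; apply: MM_undual.
have [y _] := ax_inh H2.
exists y; apply: (MM_ext H1 H2 K0 _ M); first lia.
move=> l ln; exfalso.
case: (ax_tot H1 (e1 l) x) => [h|[h|h]].
- by apply: nlo; exists l.
- by apply: (F l ln 0); [rewrite h; exact: (ax_dref H1 x)|lia|lia].
- by apply: nup; exists l.
Qed.

Fixpoint need (phi : fo) : nat :=
  match phi with
  | FLt _ _ => 0%N | FEq _ _ => 0%N
  | FNot p => need p
  | FAnd p q => maxn (need p) (need q)
  | FEx p => (2 * need p + 2)%N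
  end.

Lemma MM_swap D1 D2 lt1 d1 lt2 d2 K n e1 e2 :
  @MM D1 D2 lt1 d1 lt2 d2 K n e1 e2 -> MM lt2 d2 lt1 d1 K n e2 e1.
Proof. by move=> M k l kn ln; exact: pok_swap (M k l kn ln). Qed.

Lemma MM_mono D1 D2 lt1 d1 lt2 d2 K K' n e1 e2 : K' <= K ->
  @MM D1 D2 lt1 d1 lt2 d2 K n e1 e2 -> MM lt1 d1 lt2 d2 K' n e1 e2.
Proof. by move=> KK M k l kn ln; exact: pok_mono KK (M k l kn ln). Qed.

Lemma EF D1 D2 lt1 d1 lt2 d2 (H1 : @ax D1 lt1 d1) (H2 : @ax D2 lt2 d2) phi :
  forall n K e1 e2, fv_below n phi -> ((need phi)%:Z <= K) ->
  MM lt1 d1 lt2 d2 K n e1 e2 -> (sat lt1 e1 phi <-> sat lt2 e2 phi).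
Proof.
elim: phi => [i j|i j|p IH|p IHp q IHq|p IH] n K e1 e2 /=.
- by move=> /andP[iN jN] _ M; exact: (proj1 (M i j iN jN)).
- move=> /andP[iN jN] hK M.
  rewrite (eq_iff_d H1) (eq_iff_d H2).
  by apply: (proj2 (M i j iN jN)); lia.
- move=> fv hK M; have := IH n K e1 e2 fv hK M; tauto.
- move=> /andP[fp fq] hK M.
  have := IHp n K e1 e2 fp ltac:(lia) M.
  have := IHq n K e1 e2 fq ltac:(lia) M.
  tauto.
- move=> fv hK M; split.
    move=> [x Hx].
    have [y My] := step H1 H2 (K := K) (K' := (need p)%:Z) ltac:(lia) ltac:(lia) M x.
    by exists y; apply/(IH n.+1 (need p)%:Z _ _ fv (lexx _) My).
  move=> [y Hy].
  have [x Mx] := step H2 H1 (K := K) (K' := (need p)%:Z) ltac:(lia) ltac:(lia) (MM_swap M) y.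
  by exists x; apply/(IH n.+1 (need p)%:Z _ _ fv (lexx _) (MM_swap Mx)).
Qed.

Definition dZ (u v : int) : option int := Some (v - u).
Definition dQ (p q : QZ) : option int :=
  if p.1 == q.1 then Some (q.2 - p.2) else None.

Lemma axZ : ax Zlt dZ.
Proof.
rewrite /Zlt /dZ; constructor.
- by exists 0.
- move=> u v w; lia.
- move=> u; lia.
- move=> u v; case: (ltgtP u v); auto.
- by move=> u; rewrite subrr.
- by move=> u v [] /eqP; rewrite subr_eq0 => /eqP ->.
- by move=> u v c [<-]; lia.
- by move=> u v w a b [<-] [<-]; congr Some; lia.
- by move=> u v a [<-]; congr Some; lia.
- by [].
- by [].
- by move=> u c; exists (u + c); congr Some; lia.
Qed.

Lemma axQ : ax QZlt dQ.
Proof.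
rewrite /QZlt /dQ; constructor.
- by exists (0, 0).
- move=> [p1 p2] [q1 q2] [r1 r2] /=.
  move=> [h|[E h]] [h'|[E' h']]; subst => /=.
  + by left; exact: lt_trans h h'.
  + by left.
  + by left.
  + by right; split => //; exact: lt_trans h h'.
- move=> [p1 p2] /= [h|[_ h]]; by rewrite ltxx in h.
- move=> [p1 p2] [q1 q2] /=.
  case: (ltgtP p1 q1) => h; [by left; left|by right; right; left|].
  subst; case: (ltgtP p2 q2) => h; [by left; right|by right; right; right|by subst; right; left].
- by move=> [p1 p2] /=; rewrite eqxx subrr.
- move=> [p1 p2] [q1 q2] /=; case: eqP => // -> [] /eqP.
  by rewrite subr_eq0 => /eqP ->.
- move=> [p1 p2] [q1 q2] c /=; case: eqP => // -> [<-].
  rewrite ltxx; split; [by case => // -[] _; lia | move=> h; right; split => //; lia].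
- move=> [p1 p2] [q1 q2] [r1 r2] a b /=.
  case: eqP => // E1 [<-]; case: eqP => // E2 [<-].
  by rewrite E1 E2 eqxx; congr Some; lia.
- move=> [p1 p2] [q1 q2] a /=; case: eqP => // -> [<-].
  by rewrite eqxx; congr Some; lia.
- move=> [p1 p2] [q1 q2] [r1 r2] c /=.
  case: eqP => // ne _; case: eqP => // <- _.
  split => [[h|[E _]]|[h|[E _]]]; by [left | exfalso; apply: ne; congruence].
- move=> [p1 p2] [q1 q2] [r1 r2] c /=.
  case: eqP => // ne _; case: eqP => // <- _.
  split => [[h|[E _]]|[h|[E _]]]; by [left | exfalso; apply: ne; congruence].
- move=> [p1 p2] c; exists (p1, p2 + c) => /=.
  by rewrite eqxx; congr Some; lia.
Qed.

Definition Inf (A : nat -> Prop) := forall N, exists n, (N <= n)%N /\ A n.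
Definition conv (u : nat -> int) (B : nat -> Prop) :=
  (exists c, forall n, B n -> u n = c) \/
  (forall M, exists N, forall n, (N <= n)%N -> B n -> M < u n) \/
  (forall M, exists N, forall n, (N <= n)%N -> B n -> u n < M).

Lemma div_pos (u : nat -> int) (A : nat -> Prop)
  (fin : forall c, exists N, forall n, (N <= n)%N -> A n -> u n <> c) :
  forall m : nat, exists N, forall n, (N <= n)%N -> A n -> 0 < u n -> m%:Z < u n.
Proof.
elim => [|m [N1 IH]]; first by exists 0%N => n _ _.
have [N2 h2] := fin m.+1%:Z.
exists (maxn N1 N2) => n hn An u0.
have h1 := IH n ltac:(lia) An u0.
have := h2 n ltac:(lia) An; lia.
Qed.

Lemma div_pos' (u : nat -> int) (A : nat -> Prop)
  (fin : forall c, exists N, forall n, (N <= n)%N -> A n -> u n <> c) :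
  forall M, exists N, forall n, (N <= n)%N -> A n -> 0 < u n -> M < u n.
Proof.
move=> M; have [N h] := div_pos fin `|M|%N.
exists N => n hn An u0; have := h n hn An u0; lia.
Qed.

Lemma refine (u : nat -> int) A : Inf A ->
  exists B, [/\ Inf B, (forall n, B n -> A n) & conv u B].
Proof.
move=> IA.
case: (classic (exists c, Inf (fun n => A n /\ u n = c))) => [[c Ic]|nc].
  exists (fun n => A n /\ u n = c); split => //; first by move=> n [].
  by left; exists c => n [].
have fin : forall c, exists N, forall n, (N <= n)%N -> A n -> u n <> c.
  move=> c; apply: NNPP => hn; apply: nc; exists c => N.
  apply: NNPP => h2; apply: hn; exists N => n hN An E; apply: h2; exists n; tauto.
case: (classic (Inf (fun n => A n /\ 0 < u n))) => [Ip|np].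
  exists (fun n => A n /\ 0 < u n); split => //; first by move=> n [].
  right; left => M; have [N h] := div_pos' fin M.
  by exists N => n hn [An un]; exact: h.
have [N0 hN0] : exists N0, forall n, (N0 <= n)%N -> A n -> ~ 0 < u n.
  apply: NNPP => hn; apply: np => N.
  apply: NNPP => h2; apply: hn; exists N => n hN An E; apply: h2; exists n; tauto.
have fin' : forall c, exists N, forall n, (N <= n)%N -> A n -> - u n <> c.
  move=> c; have [N h] := fin (- c); exists N => n hn An E; apply: (h n hn An); lia.
have [N1 h1] := fin 0.
exists (fun n => A n /\ u n < 0); split; last 2 first.
- by move=> n [].
- right; right => M; have [N h] := div_pos' fin' (- M).
  by exists N => n hn [An un]; have := h n hn An ltac:(lia); lia.
move=> N; have [n [hn An]] := IA (maxn N (maxn N0 N1)).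
exists n; split; first lia.
split => //; have := hN0 n ltac:(lia) An; have := h1 n ltac:(lia) An; lia.
Qed.

Definition gp (F : nat -> int -> int) (p : int * int) n := F n p.2 - F n p.1.
Definition ISet := {A : nat -> Prop | Inf A}.

Definition convo F k (B : nat -> Prop) :=
  match @unpickle (int * int)%type k with Some p => conv (gp F p) B | None => True end.

Lemma refine_o F (A : ISet) k :
  exists B, [/\ Inf B, (forall n, B n -> proj1_sig A n) & convo F k B].
Proof.
rewrite /convo; case: (unpickle k) => [p|].
  exact: refine (proj2_sig A).
by exists (proj1_sig A); split => //; exact: (proj2_sig A).
Qed.

Definition nextA F (A : ISet) k := constructive_indefinite_description _ (refine_o F A k).

Lemma InfT : Inf (fun _ => True).
Proof. by move=> N; exists N. Qed.

Fixpoint Aseq F k : ISet :=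
  match k with
  | 0%N => exist _ (fun _ => True) InfT
  | k'.+1 => let B := nextA F (Aseq F k') k' in
      exist _ (proj1_sig B) (let: And3 h _ _ := proj2_sig B in h)
  end.

Lemma Aseq_sub F k n : proj1_sig (Aseq F k.+1) n -> proj1_sig (Aseq F k) n.
Proof.
rewrite /=; case: (nextA F (Aseq F k) k) => B [h1 h2 h3] /=; exact: h2.
Qed.

Lemma Aseq_conv F k : convo F k (proj1_sig (Aseq F k.+1)).
Proof.
rewrite /=; case: (nextA F (Aseq F k) k) => B [h1 h2 h3] /=; exact: h3.
Qed.

Lemma Aseq_mono F k j n : (k <= j)%N -> proj1_sig (Aseq F j) n -> proj1_sig (Aseq F k) n.
Proof.
move=> /subnKC <-; elim: (j - k)%N => [|i IH]; first by rewrite addn0.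
by rewrite addnS => /Aseq_sub /IH.
Qed.

Definition pick (A : ISet) N : nat :=
  proj1_sig (constructive_indefinite_description _ (proj2_sig A N)).

Lemma pickP (A : ISet) N : (N <= pick A N)%N /\ proj1_sig A (pick A N).
Proof. rewrite /pick; case: constructive_indefinite_description => n h; exact: h. Qed.

Fixpoint bsq F k : nat :=
  match k with
  | 0%N => pick (Aseq F 0) 0
  | k'.+1 => pick (Aseq F k'.+1) (bsq F k').+1
  end.

Lemma bseq_in F k : proj1_sig (Aseq F k) (bsq F k).
Proof. case: k => [|k]; [exact: (proj2 (pickP (Aseq F 0) 0)) | exact: (proj2 (pickP (Aseq F k.+1) (bsq F k).+1))]. Qed.

Lemma bseq_ge F k : (k <= bsq F k)%N.
Proof.
elim: k => [|k IH] //; case: (pickP (Aseq F k.+1) (bsq F k).+1) => h _.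
change (k.+1 <= pick (Aseq F k.+1) (bsq F k).+1)%N; lia.
Qed.

Definition ev (P : nat -> Prop) := exists J, forall j, (J <= j)%N -> P j.

Lemma PP F (x y : int) :
  let G j := F (bsq F j) y - F (bsq F j) x in
  (exists c, ev (fun j => G j = c)) \/ (forall M, ev (fun j => M < G j)) \/
  (forall M, ev (fun j => G j < M)).
Proof.
move=> G.
have := Aseq_conv F (pickle (x, y)); rewrite /convo pickleK /conv /gp /=.
have inA : forall j, ((pickle (x, y)).+1 <= j)%N -> proj1_sig (Aseq F (pickle (x, y)).+1) (bsq F j).
  by move=> j hj; apply: (Aseq_mono hj); exact: bseq_in.
case=> [[c hc]|[hp|hm]].
- left; exists c; exists (pickle (x, y)).+1 => j hj; exact: hc (inA j hj).
- right; left => M; have [N hN] := hp M.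
  exists (maxn N (pickle (x, y)).+1) => j hj.
  apply: hN; last exact: inA j ltac:(lia).
  have := bseq_ge F j; lia.
- right; right => M; have [N hN] := hm M.
  exists (maxn N (pickle (x, y)).+1) => j hj.
  apply: hN; last exact: inA j ltac:(lia).
  have := bseq_ge F j; lia.
Qed.

Definition w (k : nat) : rat := (2 ^+ k)^-1.
Lemma wS k : w k = w k.+1 + w k.+1.
Proof. rewrite /w exprS. field. by rewrite expf_neq0. Qed.
Lemma w_pos k : 0 < w k.
Proof. by rewrite /w invr_gt0 exprn_gt0. Qed.

Lemma geo m n : \sum_(m.+1 <= k < m.+1 + n) w k = w m - w (m + n).
Proof.
elim: n => [|n IH].
  by rewrite addn0 big_geq ?addn0 // subrr.
rewrite addnS big_nat_recr /=; last by rewrite leq_addr.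
rewrite IH (wS (m + n)) addSn -addnS; lra.
Qed.

Definition T (a : nat -> bool) N : rat := \sum_(0 <= k < N) (if a k then w k else 0).

Lemma T_ext a N N' : (forall k, (N <= k)%N -> a k = false) -> (N <= N')%N ->
  T a N' = T a N.
Proof.
move=> h hN; rewrite /T (@big_cat_nat _ _ _ N 0%N N' _ _ (leq0n N) hN) /=.
have -> : \sum_(N <= k < N') (if a k then w k else 0) = 0.
  by rewrite big_nat big1 // => k /andP[hk _]; rewrite h.
by rewrite addr0.
Qed.

Lemma T_lt (a b : nat -> bool) N m : (m < N)%N -> (forall k, (k < m)%N -> a k -> b k) ->
  a m = false -> b m = true -> T a N < T b N.
Proof.
move=> mN hab am bm; rewrite /T.
rewrite !(@big_cat_nat _ _ _ m 0%N N _ _ (leq0n m) (ltnW mN)) /= !(big_ltn mN) am bm.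
have h1 : \sum_(0 <= k < m) (if a k then w k else 0) <=
          \sum_(0 <= k < m) (if b k then w k else 0).
  apply: ler_sum_nat => k /andP[_ km].
  case ak: (a k); first by rewrite (hab k km ak).
  by case: (b k) => //; exact: ltW (w_pos k).
have h2 : \sum_(m.+1 <= k < N) (if a k then w k else 0) <=
          \sum_(m.+1 <= k < N) w k.
  apply: ler_sum_nat => k _; case: (a k) => //; exact: ltW (w_pos k).
have h3 : 0 <= \sum_(m.+1 <= k < N) (if b k then w k else 0).
  rewrite big_nat; apply: sumr_ge0 => k _; case: (b k) => //; exact: ltW (w_pos k).
have h4 : \sum_(m.+1 <= k < N) w k < w m.
  have -> : N = (m.+1 + (N - m.+1))%N by rewrite subnKC.
  rewrite geo; have := w_pos (m + (N - m.+1)); lra.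
lra.
Qed.

Definition Gd (Fb : nat -> int -> int) x y j := Fb j y - Fb j x.
Definition finr Fb x y := exists c, ev (fun j => Gd Fb x y j = c).
Definition plus Fb x y := forall M, ev (fun j => M < Gd Fb x y j).
Definition lec Fb u x := finr Fb u x \/ plus Fb u x.

Definition dec (P : Prop) : bool := if excluded_middle_informative P then true else false.
Lemma decP (P : Prop) : dec P <-> P.
Proof. by rewrite /dec; case: excluded_middle_informative. Qed.

Lemma ev_and P Q : ev P -> ev Q -> ev (fun j => P j /\ Q j).
Proof.
move=> [J1 h1] [J2 h2]; exists (maxn J1 J2) => j hj; split; [apply: h1|apply: h2]; lia.
Qed.

Lemma ev_ex P : ev P -> exists j, P j.
Proof. by move=> [J h]; exists J; apply: h. Qed.

Lemma ev_unique (G : nat -> int) (c c' : int) : ev (fun j => G j = c) -> ev (fun j => G j = c') -> c = c'.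
Proof. by move=> h1 h2; have [j [-> ->]] := ev_ex (ev_and h1 h2). Qed.

Lemma GdA Fb u x y j : Gd Fb u y j = Gd Fb u x j + Gd Fb x y j.
Proof. rewrite /Gd; lia. Qed.

Lemma GdN Fb x y j : Gd Fb y x j = - Gd Fb x y j.
Proof. rewrite /Gd; lia. Qed.

Lemma fin_refl Fb x : finr Fb x x.
Proof. by exists 0; exists 0%N => j _; rewrite /Gd subrr. Qed.

Lemma fin_sym Fb x y : finr Fb x y -> finr Fb y x.
Proof.
move=> [c [J h]]; exists (- c); exists J => j hj; rewrite GdN h //.
Qed.

Lemma fin_trans Fb x y z : finr Fb x y -> finr Fb y z -> finr Fb x z.
Proof.
move=> [c1 h1] [c2 h2]; exists (c1 + c2).
have [J h] := ev_and h1 h2; exists J => j hj; rewrite (@GdA Fb x y z); case: (h j hj) => -> ->//.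
Qed.

Lemma plus_nfin Fb x y : plus Fb x y -> finr Fb x y -> False.
Proof.
move=> hp [c hc]; have [j [h1 h2]] := ev_ex (ev_and hc (hp c)); lia.
Qed.

Lemma plus_trans_l Fb u x y : finr Fb u x -> plus Fb x y -> plus Fb u y.
Proof.
move=> [c hc] hp M; have [J h] := ev_and hc (hp (M - c)).
exists J => j hj; rewrite (@GdA Fb u x y); have := h j hj; lia.
Qed.

Lemma plus_trans_r Fb u x y : plus Fb u x -> finr Fb x y -> plus Fb u y.
Proof.
move=> hp [c hc] M; have [J h] := ev_and hc (hp (M - c)).
exists J => j hj; rewrite (@GdA Fb u x y); have := h j hj; lia.
Qed.

Lemma plus_trans Fb u x y : plus Fb u x -> plus Fb x y -> plus Fb u y.
Proof.
move=> h1 h2 M; have [J h] := ev_and (h1 M) (h2 0).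
exists J => j hj; rewrite (@GdA Fb u x y); have := h j hj; lia.
Qed.

Lemma lec_plus Fb u x y : lec Fb u x -> plus Fb x y -> lec Fb u y.
Proof.
move=> [h|h] hp; right; [exact: plus_trans_l h hp|exact: plus_trans h hp].
Qed.

Lemma lec_fin Fb u x y : finr Fb x y -> lec Fb u x -> lec Fb u y.
Proof.
move=> hf [h|h]; [left; exact: fin_trans h hf|right; exact: plus_trans_r h hf].
Qed.

Lemma tri Fb
  (PPh : forall x y, (exists c, ev (fun j => Gd Fb x y j = c)) \/
     (forall M, ev (fun j => M < Gd Fb x y j)) \/ (forall M, ev (fun j => Gd Fb x y j < M)))
  x y : finr Fb x y \/ plus Fb x y \/ plus Fb y x.
Proof.
case: (PPh x y) => [h|[h|h]]; [by left|by right; left|right; right].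
move=> M; have [J hJ] := h (- M); exists J => j hj; rewrite GdN; have := hJ j hj; lia.
Qed.

Definition en (k : nat) : int := if odd k then Negz k./2 else Posz k./2.

Lemma en_surj x : exists k, en k = x.
Proof.
case: x => n.
  exists n.*2; by rewrite /en odd_double doubleK.
exists n.*2.+1; rewrite /en /= odd_double /=.
by rewrite uphalf_double.
Qed.

Lemma idx_ex Fb x : exists k, dec (finr Fb (en k) x).
Proof. have [k hk] := en_surj x; exists k; apply/decP; rewrite hk; exact: fin_refl. Qed.

Definition idx Fb x := ex_minn (idx_ex Fb x).

Lemma idx_fin Fb x : finr Fb (en (idx Fb x)) x.
Proof. by rewrite /idx; case: ex_minnP => m /decP. Qed.

Lemma idx_min Fb x k : finr Fb (en k) x -> (idx Fb x <= k)%N.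
Proof. by rewrite /idx; case: ex_minnP => m _ h /decP /h. Qed.

Lemma idx_eq Fb x y : finr Fb x y -> idx Fb x = idx Fb y.
Proof.
move=> h; apply/eqP; rewrite eqn_leq; apply/andP; split; apply: idx_min.
  exact: fin_trans (idx_fin Fb y) (fin_sym h).
exact: fin_trans (idx_fin Fb x) h.
Qed.

Definition digit Fb x k := (k <= idx Fb x)%N && dec (lec Fb (en k) x).
Definition q Fb x := T (digit Fb x) (idx Fb x).+1.

Lemma T_eq (a b : nat -> bool) N : (forall k, a k = b k) -> T a N = T b N.
Proof. by move=> h; rewrite /T; apply: eq_bigr => k _; rewrite h. Qed.

Lemma q_ext Fb x N : ((idx Fb x).+1 <= N)%N -> q Fb x = T (digit Fb x) N.
Proof.
move=> hN; rewrite /q; symmetry; apply: T_ext => // k hk.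
by rewrite /digit; have -> : (k <= idx Fb x)%N = false by lia.
Qed.

Lemma q_lt Fb x y : plus Fb x y -> q Fb x < q Fb y.
Proof.
move=> hp.
set N := (maxn (idx Fb x) (idx Fb y)).+1.
rewrite (@q_ext Fb x N) ?(@q_ext Fb y N) /N; try lia.
apply: (T_lt (m := idx Fb y)); first lia.
- move=> k km /andP[_ /decP h]; apply/andP; split; first lia.
  by apply/decP; exact: lec_plus h hp.
- apply/negP => /andP[_ /decP [h|h]].
    apply: (plus_nfin hp); exact: fin_trans (fin_sym h) (idx_fin Fb y).
  have hyx := plus_trans_l (fin_sym (idx_fin Fb y)) h.
  exact: plus_nfin (plus_trans hp hyx) (fin_refl Fb x).
- by rewrite /digit leqnn /=; apply/decP; left; exact: idx_fin.
Qed.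

Lemma q_eq Fb x y : finr Fb x y -> q Fb x = q Fb y.
Proof.
move=> h; rewrite /q (idx_eq h); apply: T_eq => k.
rewrite /digit (idx_eq h); congr andb.
case: (decP (lec Fb (en k) x)) => h1 h2; case: (decP (lec Fb (en k) y)) => h3 h4.
case E1: (dec _); case E2: (dec _) => //.
  by have := h4 (lec_fin h (h1 E1)); rewrite E2.
by have := h2 (lec_fin (fin_sym h) (h3 E2)); rewrite E1.
Qed.

Definition Lv Fb x y : int :=
  match excluded_middle_informative (finr Fb x y) with
  | left h => proj1_sig (constructive_indefinite_description _ h)
  | right _ => 0 end.

Lemma Lv_spec Fb x y : finr Fb x y -> ev (fun j => Gd Fb x y j = Lv Fb x y).
Proof.
move=> h; rewrite /Lv; case: excluded_middle_informative => // h'.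
by case: constructive_indefinite_description.
Qed.

Definition z Fb x := Lv Fb (en (idx Fb x)) x.
Definition hQ Fb x : QZ := (q Fb x, z Fb x).

Lemma z_diff Fb x y : finr Fb x y -> ev (fun j => Gd Fb x y j = z Fb y - z Fb x).
Proof.
move=> h; rewrite /z.
have fx := idx_fin Fb x; have fy := idx_fin Fb y.
rewrite -(idx_eq h) in fy *.
have [J hJ] := ev_and (Lv_spec fx) (Lv_spec fy).
exists J => j hj; case: (hJ j hj) => <- <-.
rewrite (@GdA Fb (en (idx Fb x)) x y); lia.
Qed.

Lemma pok_plus Fb K x y : 0 <= K -> plus Fb x y ->
  ev (fun j => pok Zlt dZ QZlt dQ K (Fb j x) (Fb j y) (hQ Fb x) (hQ Fb y)).
Proof.
move=> K0 hp; have [J hJ] := hp K; exists J => j hj; have := hJ j hj.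
rewrite /Gd => hG.
have hq := q_lt hp.
apply: pok_far.
- by move=> c [<-]; lia.
- by move=> c; rewrite /dQ /hQ /=; case: eqP => // E; rewrite E ltxx in hq.
- split=> _; last by rewrite /Zlt; lia.
  by left.
Qed.

Lemma pair_ok Fb
  (PPh : forall x y, (exists c, ev (fun j => Gd Fb x y j = c)) \/
     (forall M, ev (fun j => M < Gd Fb x y j)) \/ (forall M, ev (fun j => Gd Fb x y j < M)))
  K x y : 0 <= K ->
  ev (fun j => pok Zlt dZ QZlt dQ K (Fb j x) (Fb j y) (hQ Fb x) (hQ Fb y)).
Proof.
move=> K0; case: (tri PPh x y) => [h|[h|h]].
- have [J hJ] := z_diff h; exists J => j hj.
  apply: (@pok_same _ _ _ _ _ _ axZ axQ K _ _ _ _ (z Fb y - z Fb x)).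
    by rewrite /dZ -(hJ j hj).
  by rewrite /dQ /hQ /= (q_eq h) eqxx.
- exact: pok_plus.
- have [J hJ] := pok_plus K0 h; exists J => j hj.
  exact: (pok_sym axZ axQ K0 (hJ j hj)).
Qed.

Unset Implicit Arguments.

Lemma ev_forall (P : nat -> nat -> Prop) n :
  (forall k, (k < n)%N -> ev (P k)) -> ev (fun j => forall k, (k < n)%N -> P k j).
Proof.
elim: n => [|n IH] h; first by exists 0%N => j _ k.
have [J1 h1] := IH (fun k kn => h k (ltnW kn)).
have [J2 h2] := h n (ltnSn n).
exists (maxn J1 J2) => j hj k; rewrite ltnS leq_eqVlt => /orP[/eqP->|kn].
  by apply: h2; lia.
by apply: h1 => //; lia.
Qed.

Definition Sset (a1 a2 : int) n : seq int :=
  a1 :: a2 :: [seq Posz i | i <- iota 0 n] ++ [seq Negz i | i <- iota 0 n].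

Lemma Sset_in a1 a2 n x : (`|x|%N < n)%N -> x \in Sset a1 a2 n.
Proof.
move=> h; rewrite /Sset !inE mem_cat; apply/orP; right; apply/orP; right.
case: x h => i /= h; apply/orP.
  by left; apply: map_f; rewrite mem_iota; lia.
by right; apply: map_f; rewrite mem_iota; lia.
Qed.

Lemma Sset1 a1 a2 n : a1 \in Sset a1 a2 n.
Proof. by rewrite /Sset inE eqxx. Qed.
Lemma Sset2 a1 a2 n : a2 \in Sset a1 a2 n.
Proof. by rewrite /Sset !inE eqxx orbT. Qed.

Theorem mainTheorem7 (m : nat) (ar : 'I_m -> nat) (phi : 'I_m -> fo)
    (Hphi : forall i, fv_below (ar i) (phi i)) (a1 a2 : int) :
  (exists (r : nat) (S : seq int),
      a1 \in S /\ a2 \in S /\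
      forall f : int -> int, hom_induced ar phi S f ->
        `|f a1 - f a2| <= r%:Z)
  \/
  (exists h : int -> QZ, hom_to_QZ ar phi h /\ (h a1).1 <> (h a2).1).
Proof.
case: (classic (exists (r : nat) (S : seq int),
      a1 \in S /\ a2 \in S /\
      forall f : int -> int, hom_induced ar phi S f ->
        `|f a1 - f a2| <= r%:Z)) => [h|nh]; [by left|right].
have Hn : forall (r : nat) S, a1 \in S -> a2 \in S ->
    exists f, hom_induced ar phi S f /\ r%:Z < `|f a1 - f a2|.
  move=> r S h1 h2; apply: NNPP => hn; apply: nh; exists r, S; split => //; split => //.
  move=> f hf; apply: NNPP => hl; apply: hn; exists f; split => //; lia.
pose F n := proj1_sig (constructive_indefinite_description _
   (Hn n (Sset a1 a2 n) (Sset1 a1 a2 n) (Sset2 a1 a2 n))).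
have FP : forall n, hom_induced ar phi (Sset a1 a2 n) (F n) /\
     n%:Z < `|F n a1 - F n a2|.
  by move=> n; rewrite /F; case: constructive_indefinite_description.
pose Fb j := F (bsq F j).
have PPh : forall x y, (exists c, ev (fun j => Gd Fb x y j = c)) \/
     (forall M, ev (fun j => M < Gd Fb x y j)) \/ (forall M, ev (fun j => Gd Fb x y j < M)).
  by move=> x y; exact: (PP F x y).
exists (hQ Fb); split.
  move=> i t Rt.
  pose K := (need (phi i))%:Z.
  have K0 : 0 <= K by rewrite /K; lia.
  have ev1 : ev (fun j => forall k, (k < ar i)%N -> forall l, (l < ar i)%N ->
      pok Zlt dZ QZlt dQ K (Fb j (t k)) (Fb j (t l)) (hQ Fb (t k)) (hQ Fb (t l))).
    apply: (@ev_forall (fun k j => forall l, (l < ar i)%N ->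
      pok Zlt dZ QZlt dQ K (Fb j (t k)) (Fb j (t l)) (hQ Fb (t k)) (hQ Fb (t l))) (ar i)) => k kn.
    apply: (@ev_forall (fun l j =>
      pok Zlt dZ QZlt dQ K (Fb j (t k)) (Fb j (t l)) (hQ Fb (t k)) (hQ Fb (t l))) (ar i)) => l ln.
    exact: (@pair_ok Fb PPh K (t k) (t l) K0).
  have ev2 : ev (fun j => forall k, (k < ar i)%N -> t k \in Sset a1 a2 (bsq F j)).
    apply: (@ev_forall (fun k j => t k \in Sset a1 a2 (bsq F j)) (ar i)) => k kn.
    exists (`|t k|%N.+1) => j hj; apply: Sset_in.
    have := bseq_ge F j; lia.
  have [j [h1 h2]] := ev_ex (ev_and ev1 ev2).
  have Rj := (proj1 (FP (bsq F j))) i t h2 Rt.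
  have M : MM Zlt dZ QZlt dQ K (ar i) (fun k => Fb j (t k)) (fun k => hQ Fb (t k)).
    by move=> k l kn ln; exact: h1.
  exact: (proj1 (EF axZ axQ (Hphi i) (lexx K) M) Rj).
rewrite /hQ /=; move=> Eq.
case: (tri PPh a1 a2) => [[c hc]|[hp|hp]].
- have [J hJ] := hc.
  pose j := maxn J `|c|%N.
  have := hJ j ltac:(lia); rewrite /Gd /Fb => E.
  have := proj2 (FP (bsq F j)); have := bseq_ge F j; lia.
- by have := q_lt hp; rewrite Eq ltxx.
- by have := q_lt hp; rewrite Eq ltxx.
Qed.
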